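(* Assume $N_k=N>0$ for all $k\in[n]$ and $F\ge nN$. Let $\boldsymbol O^*\in\mathbb R^{\mathcal N}$ be given by $O^*_{\mathcal N}=N/2$ and $O^*_i=0$ for $i<\mathcal N$ (i.e. the whole group $[n]$ uniquely shares $N/2$ points and no other subgroup shares any). Then $\boldsymbol O^*\in\Omega$ and $\boldsymbol O^*$ is a global maximiser of $T$ over $\Omega$, i.e. $T(\boldsymbol O)\le T(\boldsymbol O^* )$ for all $\boldsymbol O\in\Omega$.
   Context: Fix an integer $n\ge2$ and write $[m]=\{1,\dots,m\}$. Let $\mathcal X$ be the collection of subsets of $[n]$ with at least two elements, $\mathcal N=2^n-n-1$, and let $I:\mathcal X\to[\mathcal N]$ be a bijection such that $A\subsetneq B$ implies $I(A)<I(B)$ (so $I([n])=\mathcal N$). Write $f(c)=|I^{-1}(c)|$, $S(c)=\{i\in[\mathcal N]:I^{-1}(c)\subseteq I^{-1}(i)\}$, $B(c)=\{i\in[\mathcal N]:I^{-1}(i)\subsetneq I^{-1}(c)\}$, and for $k\in[n]$, $\tilde S(k)=\{i\in[\mathcal N]:k\in I^{-1}(i)\}$. With effective knowledges $N_k'=\min\{N_k,F\}$ (here all equal to $N$), the objective is $$T(\boldsymbol O)=\sum_{c=1}^{\mathcal N}\frac{\sum_{a\in S(c)}O_a}{\prod_{k\in I^{-1}(c)}N_k'}\Big(\sum_{k\in I^{-1}(c)}N_k'-f(c)\sum_{a\in S(c)}O_a-(f(c)-1)\sum_{a\in B(c)}O_a\Big).$$ The (relaxed, real-valued) feasible region is $\Omega=\{\boldsymbol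 O\in\mathbb R^{\mathcal N}:\boldsymbol O\ge\boldsymbol 0,\ \sum_{i\in\tilde S(k)}O_i\le N_k'\ \forall k\in[n],\ \sum_{k=1}^nN_k'-\sum_{c=1}^{\mathcal N}(f(c)-1)O_c\le F\}$; under the stated assumptions this is $\{\boldsymbol O\ge\boldsymbol 0:\sum_{i\in\tilde S(k)}O_i\le N\ \forall k\}$. *)

(* Defs.v *)
From mathcomp Require Import all_boot all_order all_algebra.
Set Implicit Arguments. Unset Strict Implicit. Unset Printing Implicit Defensive.
Import Order.TTheory GRing.Theory Num.Theory.
Local Open Scope ring_scope.

(* Number of subsets of [n] with at least two elements: 2^n - n - 1. *)
Definition Ncal (n : nat) : nat := (2 ^ n - n - 1)%N.

(* The inverse of the bijection I : X -> [Ncal].  Indices are 0-based: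
   paper index c in [Ncal] corresponds to ordinal c-1 in 'I_(Ncal n).
   Players [n] are 'I_n. *)
Definition is_index_bijection (n : nat) (Iinv : 'I_(Ncal n) -> {set 'I_n}) : Prop :=
  [/\ injective Iinv,
      (forall c, 2 <= #|Iinv c|)%N,
      (forall A : {set 'I_n}, (2 <= #|A|)%N -> exists c, Iinv c = A)
    & (forall c d, Iinv c \proper Iinv d -> (c < d)%N)].

Section Objective.
Variables (R : realFieldType) (n : nat) (Iinv : 'I_(Ncal n) -> {set 'I_n}).
Variables (Nk : 'I_n -> R) (F : R).

Definition Neff (k : 'I_n) : R := Num.min (Nk k) F.

Definition fsize (c : 'I_(Ncal n)) : R := (#|Iinv c|)%:R.

Definition Sset (c : 'I_(Ncal n)) : {set 'I_(Ncal n)} :=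
  [set i | Iinv c \subset Iinv i].

Definition Bset (c : 'I_(Ncal n)) : {set 'I_(Ncal n)} :=
  [set i | Iinv i \proper Iinv c].

Definition Stilde (k : 'I_n) : {set 'I_(Ncal n)} :=
  [set i | k \in Iinv i].

Definition Tobj (O : 'I_(Ncal n) -> R) : R :=
  \sum_(c < Ncal n)
    ((\sum_(a in Sset c) O a) / (\prod_(k in Iinv c) Neff k) *
     (\sum_(k in Iinv c) Neff k
      - fsize c * (\sum_(a in Sset c) O a)
      - (fsize c - 1) * (\sum_(a in Bset c) O a))).

Definition Omega (O : 'I_(Ncal n) -> R) : Prop :=
  [/\ (forall i, 0 <= O i),
      (forall k, \sum_(i in Stilde k) O i <= Neff k)
    & \sum_(k < n) Neff k - \sum_(c < Ncal n) (fsize c - 1) * O c <= F].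

End Objective.

(* O*: the last index (paper index Ncal, i.e. I([n])) gets N/2, all others 0. *)
Definition Ostar (R : realFieldType) (n : nat) (N : R) (i : 'I_(Ncal n)) : R :=
  if val i == (Ncal n).-1 then N / 2 else 0.

(* Main.v *)
Require Import Defs.
From mathcomp Require Import all_boot all_order all_algebra.
From mathcomp Require Import ring lra.
Import Order.TTheory GRing.Theory Num.Theory.
Local Open Scope ring_scope.

Lemma term_le (R : realFieldType) (N f s b P : R) :
  0 < P -> 1 <= f -> 0 <= s -> 0 <= b ->
  s / P * (f * N - f * s - (f - 1) * b)
  <= N / 2 / P * (f * N - f * (N / 2) - (f - 1) * 0).
Proof.
move=> P0 f1 s0 b0.
rewrite (mulrAC s) (mulrAC (N / 2)).
apply: ler_wpM2r; first by rewrite invr_ge0 ltW.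
have h1 : 0 <= f * (s - N / 2) ^+ 2 by apply: mulr_ge0; [lra | exact: sqr_ge0].
have h2 : 0 <= (f - 1) * s * b by apply: mulr_ge0; [apply: mulr_ge0; lra | done].
nra.
Qed.

Theorem mainTheorem5 (R : realFieldType) (n : nat)
    (Iinv : 'I_(Ncal n) -> {set 'I_n}) (N F : R) :
  (2 <= n)%N ->
  is_index_bijection Iinv ->
  0 < N ->
  n%:R * N <= F ->
  Omega Iinv (fun _ => N) F (Ostar N) /\
  (forall O : 'I_(Ncal n) -> R,
     Omega Iinv (fun _ => N) F O ->
     Tobj Iinv (fun _ => N) F O <= Tobj Iinv (fun _ => N) F (Ostar N)).
Proof.
move=> n2 [Iinj Icard Isurj Imono] N0 NF.
have hNF : N <= F.
  have : 2%:R <= n%:R :> R by rewrite ler_nat.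
  move=> h; nra.
have hNeff : forall k, Neff (fun _ => N) F k = N.
  by move=> k; rewrite /Neff /= min_l.
have [c0 Hc0] : exists c, Iinv c = setT.
  by apply: Isurj; rewrite cardsT card_ord.
have Npos : (0 < Ncal n)%N by apply: leq_ltn_trans (ltn_ord c0).
pose lst : 'I_(Ncal n) := @Ordinal (Ncal n) (Ncal n).-1 (ltac:(by rewrite ltn_predL)).
have Hlst : Iinv lst = setT.
  case: (eqVneq (Iinv lst) setT) => // hne.
  have : Iinv lst \proper Iinv c0 by rewrite Hc0 properT.
  move/Imono => /= H; have := ltn_ord c0.
  rewrite -[X in (_ < X)%N](ltn_predK Npos) ltnS => H2.
  by have := leq_ltn_trans H2 H; rewrite ltnn.
have Oeq : forall i, Ostar N i = if i == lst then N / 2 else 0 by [].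
have sumO : forall A : {set 'I_(Ncal n)},
    \sum_(a in A) Ostar N a = if lst \in A then N / 2 else 0.
  move=> A; case: ifP => hA.
    rewrite (bigD1 lst) //= big1 ?addr0; first by rewrite Oeq eqxx.
    by move=> i /andP [_ hi]; rewrite Oeq (negbTE hi).
  apply: big1 => i hi; rewrite Oeq; case: eqP => // e.
  by move: hA; rewrite -e hi.
have fge1 : forall c, 1 <= fsize R Iinv c.
  move=> c; rewrite /fsize ler1n; exact: leq_trans (Icard c).
have sumNeff : forall c, \sum_(k in Iinv c) Neff (fun _ => N) F k = fsize R Iinv c * N.
  move=> c; rewrite (eq_bigr (fun _ => N)); last by move=> k _; rewrite hNeff.
  rewrite sumr_const /fsize.
  by rewrite mulr_natl.
have Ppos : forall c, 0 < \prod_(k in Iinv c) Neff (fun _ => N) F k.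
  by move=> c; apply: prodr_gt0 => k _; rewrite hNeff.
have Ost0 : forall i : 'I_(Ncal n), 0 <= Ostar N i.
  move=> i; rewrite Oeq; case: ifP => _ //; lra.
split.
  split => //.
    move=> k; rewrite sumO hNeff; case: ifP => _; lra.
  rewrite (eq_bigr (fun _ => N)); last by move=> k _; rewrite hNeff.
  rewrite sumr_const card_ord -mulr_natl.
  have : 0 <= \sum_(c < Ncal n) (fsize R Iinv c - 1) * Ostar N c.
    apply: sumr_ge0 => c _; apply: mulr_ge0 => //; have := fge1 c; lra.
  lra.
move=> O [O0 _ _].
rewrite /Tobj; apply: ler_sum => c _.
rewrite !sumNeff !sumO.
have -> : lst \in Sset Iinv c by rewrite inE Hlst subsetT.
have -> : (lst \in Bset Iinv c) = false.
  rewrite inE Hlst; apply/negP => /properP [_ [x _]]; by rewrite inE.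
apply: term_le => //.
- exact: sumr_ge0.
- exact: sumr_ge0.
Qed.
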